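(* Let $k\ge1$, $G=(V,E)$ an inductively $k$-independent graph with $k$-independence ordering $v_1,\dots,v_n$, $f:2^V\to\mathbb{R}_{\ge0}$ submodular (not necessarily monotone) with $f(\emptyset)=0$, and $\beta>0$. The algorithm RANDOMIZED-PREEMPTIVE-GREEDY (described in the context) returns an independent set $S_{\mathrm{out}}$ of $G$ such that for every independent set $T$ of $G$, \[ f(T)\le 4\big(k(1+\beta)+1\big)\big(1+\beta^{-1}\big)\,\mathbb{E}[f(S_{\mathrm{out}})]. \]
   Context: $N(v)$ is the neighbourhood of $v$ (excluding $v$); $G$ is inductively $k$-independent with $k$-independence ordering $v_1,\dots,v_n$ if for every $i$, $G[N(v_i)\cap\{v_i,\dots,v_n\}]$ has no independent set of size more than $k$. For a graph with vertex ordering $u_1<\dots<u_m$ and $S$ a vertex set: $f_S(v)=f(S\cup\{v\})-f(S)$ and $\nu_f(S,u)=f_{S'}(u)$ with $S'=\{s\in S:s<u\}$. PREEMPTIVE-GREEDY on such an ordered graph (parameter $\beta$): start with $S=\emptyset$; for each vertex $v$ in order: let $C=N(v)\cap S$; if $f_S(v)\ge(1+\beta)\sum_{u\in C}\nu_f(S,u)$, replace $S$ by $(S\setminus C)\cup\{v\}$; return final $S$. RANDOMIZED-PREEMPTIVE-GREEDY: let $V'\subseteq V$ contain each vertex independently with probability $1/2$, and return the output of PREEMPTIVE-GREEDY run on the induced subgraph $G[V']$ with the ordering inherited from $v_1,\dots,v_n$, with $f$ restricted to subsets of $V'$, and parameter $\beta$. *)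

(* Defs.v *)
From mathcomp Require Import all_boot all_order all_algebra.
Set Implicit Arguments. Unset Strict Implicit. Unset Printing Implicit Defensive.
Import Order.TTheory GRing.Theory Num.Theory.
Local Open Scope ring_scope.

Section Defs.
Variable T : finType.

Definition simple_graph (e : rel T) : Prop := symmetric e /\ irreflexive e.

Definition nbhd (e : rel T) (v : T) : {set T} := [set u | e v u].

Definition independent (e : rel T) (I : {set T}) : bool :=
  [forall x in I, forall y in I, ~~ e x y].

Definition vertex_ordering (ord : seq T) : Prop :=
  uniq ord /\ forall x : T, x \in ord.

Definition rk (ord : seq T) (x : T) : nat := index x ord.

Definition k_independence_ordering (e : rel T) (ord : seq T) (k : nat) : Prop :=
  forall v : T, forall I : {set T},
    I \subset nbhd e v :&: [set u | (rk ord v <= rk ord u)%N] ->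
    independent e I -> (#|I| <= k)%N.

Variable R : realFieldType.

Definition submodular (f : {set T} -> R) : Prop :=
  forall A B : {set T}, f (A :|: B) + f (A :&: B) <= f A + f B.

Definition marg (f : {set T} -> R) (S : {set T}) (v : T) : R :=
  f (v |: S) - f S.

Definition nu (ord : seq T) (f : {set T} -> R) (S : {set T}) (u : T) : R :=
  marg f [set s in S | (rk ord s < rk ord u)%N] u.

Definition pg_step (e : rel T) (ord : seq T) (f : {set T} -> R) (beta : R)
    (S : {set T}) (v : T) : {set T} :=
  let C := nbhd e v :&: S in
  if (1 + beta) * (\sum_(u in C) nu ord f S u) <= marg f S v
  then v |: (S :\: C) else S.

(* PREEMPTIVE-GREEDY run on the induced subgraph G[V'] with the inherited
   ordering (vertices of V' processed in the order of ord); f restricted to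
   subsets of V' (the algorithm only evaluates f on subsets of V'). *)
Definition preemptive_greedy (e : rel T) (ord : seq T) (f : {set T} -> R)
    (beta : R) (V' : {set T}) : {set T} :=
  foldl (pg_step e ord f beta) set0 [seq v <- ord | v \in V'].

(* E[f(S_out)] for RANDOMIZED-PREEMPTIVE-GREEDY: V' is uniform over all
   subsets of V (each vertex kept independently with probability 1/2). *)
Definition expected_rpg (e : rel T) (ord : seq T) (f : {set T} -> R)
    (beta : R) : R :=
  (2 ^+ #|T|)^-1 * \sum_(V' : {set T}) f (preemptive_greedy e ord f beta V').

End Defs.

(* Main.v *)
Require Import Defs.
From mathcomp Require Import all_boot all_order all_algebra.
From mathcomp Require Import ring lra zify.
Import Order.TTheory GRing.Theory Num.Theory.
Set Implicit Arguments. Unset Strict Implicit. Unset Printing Implicit Defensive.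
Local Open Scope ring_scope.

Lemma sub_marg (R : realFieldType) (T : finType) (f : {set T} -> R)
  (B B' : {set T}) (u : T) :
  submodular f -> B \subset B' -> u \notin B' -> marg f B' u <= marg f B u.
Proof.
move=> sf sBB' uB'; rewrite /marg.
have := sf (u |: B) B'.
have -> : (u |: B) :|: B' = u |: B'.
  by rewrite -setUA (setUidPr sBB').
have -> : (u |: B) :&: B' = B.
  apply/setP=> x; rewrite !inE; case: eqP => [->|_] /=.
    by rewrite (negbTE uB'); apply/esym/negbTE/negP=> /(subsetP sBB'); apply/negP.
  by case xB: (x \in B); rewrite ?(subsetP sBB' x xB).
by move=> H; lra.
Qed.

Lemma rk_inj (T : finType) (ord : seq T) :
  (forall x, x \in ord) -> injective (rk ord).
Proof.
move=> all x y H; rewrite -[x](nth_index x (all x)) -[y](nth_index x (all y)).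
by rewrite /rk in H; rewrite H.
Qed.

Definition lows (T : finType) (ord : seq T) (S : {set T}) (u : T) :=
  [set s in S | (rk ord s < rk ord u)%N].

Lemma nu_anti (R : realFieldType) (T : finType) (ord : seq T) (f : {set T} -> R)
  (X Y : {set T}) u : submodular f -> lows ord X u \subset lows ord Y u ->
  nu ord f Y u <= nu ord f X u.
Proof.
move=> sf sXY; apply: sub_marg => //; rewrite inE ltnn andbF //.
Qed.

Lemma telescope (R : realFieldType) (T : finType) (ord : seq T) (f : {set T} -> R) :
  injective (rk ord) -> f set0 = 0 ->
  forall S : {set T}, \sum_(u in S) nu ord f S u = f S.
Proof.
move=> rinj f0 S; move: {2}#|S| (erefl #|S|) => n; elim: n S => [|n IH] S cS.
  by move/eqP: cS; rewrite cards_eq0 => /eqP ->; rewrite big_set0 f0.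
have [m mS] : exists m, m \in S.
  by apply/set0Pn; rewrite -card_gt0 cS.
case: (@arg_maxnP _ m (mem S) (rk ord) mS) => M MS0 Mmax.
have MS : M \in S := MS0.
rewrite (bigD1 M) //=.
have lowM : [set s in S | (rk ord s < rk ord M)%N] = S :\ M.
  apply/setP=> x; rewrite !inE; case xS: (x \in S); rewrite ?andbF ?andbT //.
  case: eqP => [->|xM]; first by rewrite ltnn.
  have Hx : (rk ord x <= rk ord M)%N := Mmax x xS.
  rewrite ltn_neqAle Hx andbT; apply/negP => /eqP /rinj; exact: xM.
have -> : nu ord f S M = f S - f (S :\ M).
  by rewrite /nu /marg lowM setD1K.
rewrite -(IH (S :\ M)); last by move: cS; rewrite (cardsD1 M S) MS add1n => -[].
rewrite [X in _ + X = _](eq_bigl (fun u => u \in S :\ M)); last first.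
  by move=> x; rewrite !inE andbC.
rewrite [X in _ + X = _](eq_bigr (fun u => nu ord f (S :\ M) u)).
  by rewrite IH ?subrK //; move: cS; rewrite (cardsD1 M S) MS add1n => -[].
move=> u; rewrite !inE => /andP [uM uS]; rewrite /nu; congr marg.
apply/setP=> x; rewrite !inE; case: eqP => [->|] //=.
  have Hu : (rk ord u <= rk ord M)%N := Mmax u uS.
  by rewrite ltnNge Hu andbF.
Qed.

Lemma remove_bound (R : realFieldType) (T : finType) (ord : seq T) (f : {set T} -> R)
  (S C : {set T}) : submodular f -> injective (rk ord) -> f set0 = 0 ->
  C \subset S -> f S - f (S :\: C) <= \sum_(u in C) nu ord f S u.
Proof.
move=> sf ri f0 CS.
rewrite -{1}(telescope ri f0 S) -(telescope ri f0 (S :\: C)) (big_setID C) /=.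
rewrite (setIidPr CS).
suff H : \sum_(i in S :\: C) nu ord f S i <= \sum_(i in S :\: C) nu ord f (S :\: C) i by lra.
apply: ler_sum => u; rewrite inE => /andP [uC uS].
apply: nu_anti => //; apply/subsetP => x; rewrite !inE.
by case/andP => /andP [_ ->] ->.
Qed.

Lemma indep_sub (T : finType) (e : rel T) (A B : {set T}) :
  B \subset A -> independent e A -> independent e B.
Proof.
move=> BA /forallP H; apply/forallP => x; apply/implyP => xB.
apply/forallP => y; apply/implyP => yB.
have := H x; move/implyP/(_ (subsetP BA x xB))/forallP/(_ y)/implyP.
exact: (fun h => h (subsetP BA y yB)).
Qed.

Definition mcount (T : finType) (e : rel T) (ord : seq T) (I A P : {set T}) (u : T) : nat :=
  #|[set t in I :&: P :\: A | e u t && (rk ord u < rk ord t)%N]|.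

Lemma mcount_le (T : finType) (e : rel T) (ord : seq T) (k : nat) (I A P : {set T}) u :
  k_independence_ordering e ord k -> independent e I ->
  (mcount e ord I A P u <= k)%N.
Proof.
move=> kio iI; apply: (kio u).
  by apply/subsetP => t; rewrite /nbhd !inE; case/and3P => _ -> /ltnW ->.
apply: (indep_sub _ iI); apply/subsetP => t; rewrite !inE.
by case/and3P => /and3P [_ -> _] _ _.
Qed.

Definition step2 (T : finType) (R : realFieldType) (e : rel T) (ord : seq T)
  (f : {set T} -> R) (beta : R) (sa : {set T} * {set T}) (v : T) :=
  let C := nbhd e v :&: sa.1 in
  if (1 + beta) * (\sum_(u in C) nu ord f sa.1 u) <= marg f sa.1 v
  then (v |: (sa.1 :\: C), v |: sa.2) else sa.

Lemma fold2_fst (T : finType) (R : realFieldType) (e : rel T) (ord : seq T)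
  (f : {set T} -> R) (beta : R) l sa :
  (foldl (step2 e ord f beta) sa l).1 = foldl (pg_step e ord f beta) sa.1 l.
Proof.
elim: l sa => [|v l IH] sa //=; rewrite IH; congr foldl.
by rewrite /step2 /pg_step; case: ifP.
Qed.

Definition Inv (T : finType) (R : realFieldType) (e : rel T) (ord : seq T) (k : nat)
  (f : {set T} -> R) (beta : R) (I S A P : {set T}) : Prop :=
  [/\ S \subset A, A \subset P, (forall u, u \in S -> 0 <= nu ord f S u) &
   exists Wr : R, [/\ 0 <= Wr, beta * Wr <= f S, f A <= Wr + f S &
     \sum_(t in I :&: P :\: A) marg f A t <=
       (1 + beta) * (k%:R * Wr + \sum_(u in S) nu ord f S u * (mcount e ord I A P u)%:R)]].

Lemma lows_new (T : finType) (ord : seq T) (S C : {set T}) v u :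
  (forall x, x \in S -> (rk ord x < rk ord v)%N) -> u \in S ->
  lows ord (v |: (S :\: C)) u \subset lows ord S u.
Proof.
move=> H uS; apply/subsetP => x; rewrite !inE; case: eqP => [->|_] /=.
  by rewrite ltnNge (ltnW (H u uS)).
by case/andP => /andP [_ ->] ->.
Qed.

Lemma lows_v (T : finType) (ord : seq T) (S C : {set T}) v :
  (forall x, x \in S -> (rk ord x < rk ord v)%N) ->
  lows ord (v |: (S :\: C)) v = S :\: C.
Proof.
move=> H; apply/setP => x; rewrite !inE; case: eqP => [->|_] /=.
  rewrite ltnn; case vS: (v \in S); rewrite ?andbF ?andbT //.
  by move: (H v vS); rewrite ltnn.
case xS: (x \in S); rewrite ?andbF ?andbT //.
by rewrite (H x xS) andbT.
Qed.

Lemma step_inv (T : finType) (R : realFieldType) (e : rel T) (ord : seq T) (k : nat)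
  (f : {set T} -> R) (beta : R) (I S A P : {set T}) (v : T) :
  submodular f -> injective (rk ord) -> f set0 = 0 -> symmetric e ->
  k_independence_ordering e ord k -> independent e I -> 0 < beta ->
  (forall x, x \in P -> (rk ord x < rk ord v)%N) ->
  Inv e ord k f beta I S A P ->
  Inv e ord k f beta I (step2 e ord f beta (S, A) v).1
      (step2 e ord f beta (S, A) v).2 (v |: P).
Proof.
move=> sf ri f0 se kio iI bpos HP [SA AP nuS [Wr [Wr0 bWr fA HQ]]].
have HS : forall x, x \in S -> (rk ord x < rk ord v)%N.
  by move=> x xS; apply: HP; apply: (subsetP AP); apply: (subsetP SA).
have vP : v \notin P by apply/negP => /HP; rewrite ltnn.
have vA : v \notin A by apply/negP => /(subsetP AP); apply/negP.
have vS : v \notin S by apply/negP => /(subsetP SA); apply/negP.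
have mk : forall A P u, (mcount e ord I A P u <= k)%N.
  by move=> A' P' u; apply: mcount_le.
have nuE : forall X u, nu ord f X u = marg f (lows ord X u) u by [].
rewrite /step2 /=.
set C := nbhd e v :&: S.
have CS : C \subset S by apply: subsetIr.
set sC := \sum_(u in C) nu ord f S u.
have sC0 : 0 <= sC by apply: sumr_ge0 => u uC; apply: nuS; apply: (subsetP CS).
have b1 : 0 <= 1 + beta by lra.
case: ifP => acc.
- set S' := v |: (S :\: C); rewrite /=.
  have mS : marg f S v <= marg f (S :\: C) v := sub_marg sf (subsetDl S C) vS.
  have fS' : f S' = f (S :\: C) + marg f (S :\: C) v by rewrite /marg /S'; ring.
  have rb : f S - f (S :\: C) <= sC := remove_bound sf ri f0 CS.
  have key : f (v |: S) + f (S :\: C) <= f S' + f S.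
    have := sf S' S.
    have -> : S' :|: S = v |: S.
      apply/setP => x; rewrite !inE; case: eqP => //= _.
      by case: (x \in S); rewrite ?andbF ?andbT ?orbT.
    have -> : S' :&: S = S :\: C.
      apply/setP => x; rewrite !inE; case: eqP => [->|_] /=.
        by rewrite (negbTE vS) !andbF.
      by case: (x \in S); rewrite ?andbF ?andbT.
    by [].
  have fS'2 : f S + marg f S v - sC <= f S' by move: key rb; rewrite /marg; lra.
  have acc' : (1 + beta) * sC <= marg f S v by [].
  have nuS' : forall u, u \in S' -> 0 <= nu ord f S' u.
    move=> u; rewrite !inE; case: eqP => [->|uv] /=.
      move=> _; rewrite nuE lows_v //; apply: le_trans _ mS.
      by apply: le_trans acc'; apply: mulr_ge0.
    case/andP => uC uS; apply: le_trans (nuS u uS) _; apply: nu_anti => //.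
    exact: lows_new.
  split.
  + apply/subsetP => x; rewrite !inE; case/orP => [->//|/andP [_ xS]].
    by rewrite (subsetP SA x xS) orbT.
  + by apply: setUS.
  + exact: nuS'.
  exists (Wr + sC); split.
  + by apply: addr_ge0.
  + move: acc'; rewrite mulrDr mulrDl mul1r => acc'; lra.
  + have mA : marg f A v <= marg f (S :\: C) v.
      apply: sub_marg => //; apply: subset_trans (subsetDl S C) SA.
    move: mA fA fS' rb; rewrite /marg; lra.
  have J : I :&: (v |: P) :\: (v |: A) = I :&: P :\: A.
    apply/setP => t; rewrite !inE; case: eqP => [->|_] //=.
    by rewrite (negbTE vP) !andbF.
  have mE : forall u, mcount e ord I (v |: A) (v |: P) u = mcount e ord I A P u.
    by move=> u; rewrite /mcount J.
  rewrite J (eq_bigr (fun u => nu ord f S' u * (mcount e ord I A P u)%:R) (F1 := fun u => nu ord f S' u * (mcount e ord I (v |: A) (v |: P) u)%:R)); last by move=> u _; rewrite mE.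
  have h1 : \sum_(t in I :&: P :\: A) marg f (v |: A) t <=
            \sum_(t in I :&: P :\: A) marg f A t.
    apply: ler_sum => t; rewrite !inE => /and3P [tA tI tP].
    apply: sub_marg => //; first exact: subsetUr.
    rewrite !inE negb_or tA andbT; apply/eqP => tv; move: tP; rewrite tv.
    by apply/negP.
  have h2a : \sum_(u in C) nu ord f S u * (mcount e ord I A P u)%:R <= k%:R * sC.
    rewrite /sC mulr_sumr; apply: ler_sum => u uC.
    rewrite [k%:R * _]mulrC; apply: ler_wpM2l; first by apply: nuS; apply: (subsetP CS).
    by rewrite ler_nat.
  have h2b : \sum_(u in S :\: C) nu ord f S u * (mcount e ord I A P u)%:R <=
             \sum_(u in S') nu ord f S' u * (mcount e ord I A P u)%:R.
    rewrite /S' big_setU1 /=; last by rewrite inE (negbTE vS) andbF.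
    apply: ler_wpDl; first by apply: mulr_ge0; [apply: nuS'; rewrite !inE eqxx | ].
    apply: ler_sum => u uSC; apply: ler_wpM2r => //.
    apply: nu_anti => //; apply: lows_new => //.
    by move: uSC; rewrite inE => /andP [].
  have h2 : \sum_(u in S) nu ord f S u * (mcount e ord I A P u)%:R <=
            k%:R * sC + \sum_(u in S') nu ord f S' u * (mcount e ord I A P u)%:R.
    rewrite (big_setID C) /= (setIidPr CS); exact: lerD.
  apply: le_trans h1 _; apply: le_trans HQ _; apply: ler_wpM2l => //.
  move: h2; set X := \sum_(u in S) _; set Y := \sum_(u in S') _; lra.
- have rej : marg f S v < (1 + beta) * sC by rewrite ltNge acc.
  have mA : marg f A v <= marg f S v := sub_marg sf SA vA.
  split => //; first by apply: subset_trans AP (subsetUr _ _).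
  exists Wr; split => //.
  have vJ : v \notin I :&: P :\: A by rewrite !inE (negbTE vP) !andbF.
  case vI: (v \in I); last first.
    have J : I :&: (v |: P) :\: A = I :&: P :\: A.
      apply/setP => t; rewrite !inE; case: eqP => [->|_] //=.
      by rewrite vI (negbTE vP) !andbF.
    by rewrite /mcount J.
  have J : I :&: (v |: P) :\: A = v |: (I :&: P :\: A).
    apply/setP => t; rewrite !inE; case: eqP => [->|_] //=.
    by rewrite vI vA.
  have mE : forall u, u \in S ->
      mcount e ord I A (v |: P) u = ((e u v : nat) + mcount e ord I A P u)%N.
    move=> u uS; rewrite /mcount J.
    set B := [set t in I :&: P :\: A | e u t && (rk ord u < rk ord t)%N].
    have vB : v \notin B by rewrite inE (negbTE vJ).
    have -> : [set t in v |: (I :&: P :\: A) | e u t && (rk ord u < rk ord t)%N]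
              = if e u v then v |: B else B.
      apply/setP => t; rewrite /B; case euv: (e u v); rewrite !inE;
        case: eqP => [->|_] /=; rewrite ?euv ?HS ?(negbTE vJ) ?andbF //.
    by case: (e u v); rewrite ?cardsU1 ?vB.
  rewrite J big_setU1 //=.
  under [X in _ <= _ * (_ + X)]eq_bigr => u uS do
    rewrite (mE u uS) natrD mulrDr.
  rewrite [X in _ <= _ * (_ + X)]big_split /=.
  have -> : \sum_(i in S) nu ord f S i * (e i v : nat)%:R = sC.
    rewrite /sC /C (big_setID (nbhd e v)) /= setIC.
    rewrite [X in _ + X]big1 ?addr0; last first.
      move=> u; rewrite /nbhd !inE => /andP [uN _].
      by rewrite se (negbTE uN) mulr0.
    apply: eq_bigr => u; rewrite /nbhd !inE => /andP [euv _].
    by rewrite se euv mulr1.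
  move: HQ; set X := \sum_(u in S) _; set Q := \sum_(t in _) _.
  rewrite !mulrDr => HQ; lra.
Qed.

Lemma fold_inv (T : finType) (R : realFieldType) (e : rel T) (ord : seq T) (k : nat)
  (f : {set T} -> R) (beta : R) (I : {set T}) :
  submodular f -> injective (rk ord) -> f set0 = 0 -> symmetric e ->
  k_independence_ordering e ord k -> independent e I -> 0 < beta ->
  forall (l : seq T) (sa : {set T} * {set T}) (P : {set T}), pairwise (fun x y => (rk ord x < rk ord y)%N) l ->
  (forall x y, x \in P -> y \in l -> (rk ord x < rk ord y)%N) ->
  Inv e ord k f beta I sa.1 sa.2 P ->
  Inv e ord k f beta I (foldl (step2 e ord f beta) sa l).1
      (foldl (step2 e ord f beta) sa l).2 (P :|: [set x in l]).
Proof.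
move=> sf ri f0 se kio iI bpos; elim=> [|v l IH] sa P /=.
  by move=> _ _; have -> : P :|: [set x in [::]] = P by apply/setP => x; rewrite !inE orbF.
case/andP => /allP vl pl HP Hinv.
have -> : P :|: [set x in v :: l] = (v |: P) :|: [set x in l].
  by apply/setP => x; rewrite !inE; case: (x == v); rewrite ?orbT.
apply: IH => //.
  move=> x y; rewrite !inE => /orP [/eqP -> yl|xP yl]; first exact: vl.
  by apply: HP => //; rewrite inE yl orbT.
case: sa Hinv => S A Hinv; apply: step_inv => // x xP.
by apply: HP => //; rewrite inE eqxx.
Qed.

Lemma indep_step (T : finType) (R : realFieldType) (e : rel T) (ord : seq T)
  (f : {set T} -> R) (beta : R) S v :
  simple_graph e -> independent e S -> independent e (pg_step e ord f beta S v).
Proof.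
move=> [se ie] iS; rewrite /pg_step; case: ifP => // _.
apply/forallP => x; apply/implyP => hx; apply/forallP => y; apply/implyP => hy.
move: hx hy; rewrite /nbhd !inE.
case: (eqVneq x v) => [->|xv] /=; case: (eqVneq y v) => [->|yv] /=.
- by rewrite ie.
- by move=> _ /andP [H yS]; rewrite yS andbT in H.
- by move=> /andP [H xS] _; rewrite xS andbT in H; rewrite se.
- case/andP => _ xS /andP [_ yS].
  by move/forallP: iS => /(_ x) /implyP /(_ xS) /forallP /(_ y) /implyP /(_ yS).
Qed.

Lemma indep_fold (T : finType) (R : realFieldType) (e : rel T) (ord : seq T)
  (f : {set T} -> R) (beta : R) l S :
  simple_graph e -> independent e S -> independent e (foldl (pg_step e ord f beta) S l).
Proof.
move=> sg; elim: l S => [|v l IH] S //= iS; apply: IH; exact: indep_step.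
Qed.

Lemma union_bound (T : finType) (R : realFieldType) (f : {set T} -> R) (A X : {set T}) :
  submodular f -> f (A :|: X) <= f A + \sum_(t in X :\: A) marg f A t.
Proof.
move=> sf.
have -> : A :|: X = A :|: (X :\: A).
  by apply/setP => x; rewrite !inE; case: (x \in A).
have : [disjoint X :\: A & A].
  by rewrite -setI_eq0; apply/eqP/setP => x; rewrite !inE; case: (x \in A); rewrite ?andbF.
move: (X :\: A) => Y; move: {2}#|Y| (erefl #|Y|) => n; elim: n Y => [|n IH] Y cY dY.
  by move/eqP: cY; rewrite cards_eq0 => /eqP ->; rewrite big_set0 setU0 addr0.
have [t tY] : exists t, t \in Y by apply/set0Pn; rewrite -card_gt0 cY.
have cY0 : #|Y :\ t| = n by move: cY; rewrite (cardsD1 t Y) tY add1n => -[].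
have dY0 : [disjoint Y :\ t & A].
  by apply: disjointWl dY; apply: subsetDl.
have tA : t \notin A by move: dY => /disjointFr /(_ tY) ->.
rewrite (bigD1 t) //=.
rewrite (eq_bigl (fun i => i \in Y :\ t)); last by move=> x; rewrite !inE andbC.
have H := IH _ cY0 dY0.
have HY : A :|: Y = t |: (A :|: (Y :\ t)).
  apply/setP => x; rewrite !inE; case: eqP => [->|] //=; first by rewrite tY orbT.
have Hm : marg f (A :|: (Y :\ t)) t <= marg f A t.
  apply: sub_marg => //; first exact: subsetUl.
  by rewrite !inE negb_or tA /= eqxx.
move: Hm H; rewrite HY /marg; lra.
Qed.

Lemma ord_pairwise (T : finType) (ord : seq T) :
  uniq ord -> pairwise (fun x y => (rk ord x < rk ord y)%N) ord.
Proof.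
move=> u; case E: ord => [|x0 s] //; rewrite -E.
apply/(pairwiseP x0) => i j; rewrite !inE => hi hj ij.
by rewrite /rk !index_uniq.
Qed.

Lemma det_bound (T : finType) (R : realFieldType) (e : rel T) (ord : seq T) (k : nat)
  (f : {set T} -> R) (beta : R) (I V' : {set T}) :
  submodular f -> f set0 = 0 -> symmetric e ->
  k_independence_ordering e ord k -> independent e I -> 0 < beta ->
  vertex_ordering ord ->
  let sa := foldl (step2 e ord f beta) (set0, set0) [seq v <- ord | v \in V'] in
  sa.2 \subset V' /\
  f ((I :&: V') :|: sa.2) <= (k%:R * (1 + beta) + 1) * (1 + beta^-1) * f sa.1.
Proof.
move=> sf f0 se kio iI bpos [uo allo] sa.
have ri := rk_inj allo.
have I0 : Inv e ord k f beta I set0 set0 set0.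
  split => //=; first by move=> u; rewrite inE.
  exists 0; rewrite f0 mulr0 addr0; split => //.
  by rewrite setI0 set0D !big_set0 mulr0 addr0 mulr0.
have := @fold_inv _ _ _ _ _ _ _ _ sf ri f0 se kio iI bpos [seq v <- ord | v \in V'] (set0, set0) set0
  (pairwise_filter _ (ord_pairwise uo)) _ I0.
rewrite -/sa.
have -> : set0 :|: [set x in [seq v <- ord | v \in V']] = V'.
  by apply/setP => x; rewrite !inE mem_filter allo andbT.
case; first by move=> x y; rewrite inE.
move: sa => [S A] /= SA AV nuS [Wr [Wr0 bWr fA HQ]]; split => //.
have ub := union_bound A (I :&: V') sf.
have -> : I :&: V' :|: A = A :|: (I :&: V') by rewrite setUC.
have hm : \sum_(u in S) nu ord f S u * (mcount e ord I A V' u)%:R <= k%:R * f S.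
  rewrite -(telescope ri f0 S) mulr_sumr; apply: ler_sum => u uS.
  rewrite mulrC; apply: ler_wpM2r; first exact: nuS.
  by rewrite ler_nat; apply: mcount_le.
have Wb : Wr <= beta^-1 * f S.
  by rewrite ler_pdivlMl // mulrC.
set K := k%:R * (1 + beta) + 1.
have K0 : 0 <= K.
  rewrite /K; apply: addr_ge0 => //; apply: mulr_ge0 => //; lra.
have b1 : 0 <= 1 + beta by lra.
have step1 : f (A :|: (I :&: V')) <= K * (Wr + f S).
  apply: (le_trans ub).
  have h1 : \sum_(t in I :&: V' :\: A) marg f A t <= (1 + beta) * (k%:R * Wr + k%:R * f S).
    by apply: (le_trans HQ); apply: ler_wpM2l => //; apply: lerD.
  have -> : K * (Wr + f S) = (Wr + f S) + (1 + beta) * (k%:R * Wr + k%:R * f S).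
    by rewrite /K; ring.
  lra.
apply: (le_trans step1).
have -> : K * (1 + beta^-1) * f S = K * (beta^-1 * f S + f S) by ring.
by apply: ler_wpM2l => //; lra.
Qed.

Lemma pair_sigma (T : finType) (R : realFieldType) (f : {set T} -> R) (I : {set T})
  (h : {set T} -> {set T}) :
  submodular f -> (forall A, 0 <= f A) -> (forall V, h V \subset V) ->
  \sum_(V : {set T}) f (I :&: V) <= 2 * \sum_(V : {set T}) f ((I :&: V) :|: h V).
Proof.
move=> sf fp hs.
pose sg := fun V : {set T} => (V :&: I) :|: (~: V :\: I).
set G := \sum_(V : {set T}) f ((I :&: V) :|: h V).
have sgK : involutive sg.
  move=> V; apply/setP => x; rewrite /sg !inE.
  by case: (x \in V); case: (x \in I).
have -> : 2 * G = G + G by ring.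
rewrite {2}/G [X in _ <= _ + X](reindex_inj (inv_inj sgK)) /G -big_split /=.
apply: ler_sum => V _.
have IsV : I :&: sg V = I :&: V.
  by apply/setP => x; rewrite /sg !inE; case: (x \in V); case: (x \in I).
rewrite IsV.
set Y := I :&: V; set A1 := h V; set A2 := h (sg V).
have s1 := hs V; have s2 := hs (sg V); rewrite -/A1 -/A2 in s1 s2.
have := sf (Y :|: A1) (Y :|: A2).
have -> : (Y :|: A1) :&: (Y :|: A2) = Y.
  apply/setP => x; rewrite !inE.
  have := subsetP s1 x; have := subsetP s2 x; rewrite /sg !inE.
  case: (x \in A1); case: (x \in A2); case: (x \in I); case: (x \in V) => //=;
    by move=> /(_ isT) ? /(_ isT).
have := fp ((Y :|: A1) :|: (Y :|: A2)); lra.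
Qed.

Lemma pair_compl (T : finType) (R : realFieldType) (f : {set T} -> R) (I : {set T}) :
  submodular f -> f set0 = 0 ->
  (2 ^ #|T|)%:R * f I <= 2 * \sum_(V : {set T}) f (I :&: V).
Proof.
move=> sf f0.
set G := \sum_(V : {set T}) _.
have -> : 2 * G = G + G by ring.
rewrite {2}/G [X in _ <= _ + X](reindex_inj (inv_inj (@setCK T))) /G -big_split /=.
have -> : (2 ^ #|T|)%:R * f I = \sum_(V : {set T}) f I.
  rewrite sumr_const mulr_natl; congr (_ *+ _).
  rewrite -cardsT -card_powerset; apply: eq_card => V.
  by rewrite powersetE subsetT.
apply: ler_sum => V _.
have := sf (I :&: V) (I :&: ~: V).
have -> : (I :&: V) :|: (I :&: ~: V) = I by rewrite -setIUr setUCr setIT.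
have -> : (I :&: V) :&: (I :&: ~: V) = set0.
  by apply/setP => x; rewrite !inE; case: (x \in V); rewrite ?andbF.
by rewrite f0 addr0.
Qed.

Theorem theorem7 (R : realFieldType) (T : finType) (e : rel T) (ord : seq T)
    (k : nat) (f : {set T} -> R) (beta : R) :
  (1 <= k)%N ->
  simple_graph e ->
  vertex_ordering ord ->
  k_independence_ordering e ord k ->
  (forall A : {set T}, 0 <= f A) ->
  f set0 = 0 ->
  submodular f ->
  0 < beta ->
  (forall V' : {set T}, independent e (preemptive_greedy e ord f beta V')) /\
  (forall S : {set T}, independent e S ->
     f S <= 4 * (k%:R * (1 + beta) + 1) * (1 + beta^-1)
              * expected_rpg e ord f beta).
Proof.
move=> k1 sg vo kio fp f0 sf bpos; split.
  move=> V'; rewrite /preemptive_greedy; apply: indep_fold => //.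
  by apply/forallP => x; rewrite inE.
move=> I iI; rewrite /expected_rpg.
set c := (k%:R * (1 + beta) + 1) * (1 + beta^-1).
pose h := fun V : {set T} =>
  (foldl (step2 e ord f beta) (set0, set0) [seq v <- ord | v \in V]).2.
have se : symmetric e by case: sg.
have hs : forall V, h V \subset V.
  by move=> V; case: (det_bound (I := I) V sf f0 se kio iI bpos vo).
have hb : forall V, f ((I :&: V) :|: h V) <= c * f (preemptive_greedy e ord f beta V).
  move=> V; case: (det_bound (I := I) V sf f0 se kio iI bpos vo) => _.
  by rewrite fold2_fst.
have H1 := pair_compl I sf f0.
have H2 := @pair_sigma _ _ f I h sf fp hs.
have H3 : \sum_(V : {set T}) f ((I :&: V) :|: h V) <=
          c * \sum_(V : {set T}) f (preemptive_greedy e ord f beta V).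
  by rewrite mulr_sumr; apply: ler_sum => V _; apply: hb.
have N0 : 0 < (2 ^+ #|T| : R) by apply: exprn_gt0.
rewrite [X in _ <= X](_ : _ = (2 ^+ #|T|)^-1 * (4 * (c * \sum_(V : {set T}) f (preemptive_greedy e ord f beta V)))); last by rewrite /c; ring.
rewrite ler_pdivlMl // -natrX.
move: H1 H2 H3; set X := \sum_(V : {set T}) f (I :&: V).
set Y := \sum_(V : {set T}) f ((I :&: V) :|: h V).
set Z := c * _; lra.
Qed.
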